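(* Let $N\ge 1$ and let $A_N^*:=\bigcup_{j=1}^N\bigcup_{B\in L_j(\Gamma)}B$ be the union of all lower sets in $\Gamma=\mathbb N_0^s$ of cardinality at most $N$. Then $A_N^*$ is a monomial degree reducing universal interpolation set of order $N$, and it is minimal: every monomial degree reducing universal interpolation set of order $N$ contains $A_N^*$; in particular no proper subset of $A_N^*$ is a monomial degree reducing universal interpolation set of order $N$.
   Context: $\Pi=\mathbb C[x_1,\dots,x_s]$, $\deg$ is total degree with $\deg 0<0$. For $A\subset\Gamma$, $\Pi_A$ is the span of the monomials $x^\alpha$, $\alpha\in A$. A subspace $\mathcal P\subseteq\Pi$ is a degree reducing universal interpolation space of order $N$ if for every finite $X\subset\mathbb C^s$ with $\#X\le N$ and every $q\in\Pi$ there is $p\in\mathcal P$ with $p|_X=q|_X$ and $\deg p\le\deg q$. A set $A\subset\Gamma$ is a monomial degree reducing universal interpolation set of order $N$ if $\Pi_A$ is a degree reducing universal interpolation space of order $N$. For $\alpha,\beta\in\Gamma$, $\alpha\le\beta$ means $\alpha_j\le\beta_j$ for all $j$; $B\subset\Gamma$ is a lower set if $\alpha\in B$ and $\beta\le\alpha$ imply $\beta\in B$; $L_j(\Gamma)$ denotes the set of lower sets of cardinality $j$. *)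

(* Defs.v *)
From mathcomp Require Import all_boot all_algebra.
From mathcomp Require Import Rstruct complex.
From mathcomp Require Import mpoly.
From Stdlib Require Import Reals.

Set Implicit Arguments.
Unset Strict Implicit.
Unset Printing Implicit Defensive.

Local Open Scope ring_scope.

Definition CC : numClosedFieldType := (complex R).

(* Γ = N_0^s is the type 'X_{1..s} of multinomials (exponent vectors);
   monomial x^α is 'X_[α]; Π is {mpoly CC[s]}.
   Subsets of Γ are predicates 'X_{1..s} -> Prop. *)

Definition in_Pi_A (s : nat) (A : 'X_{1..s} -> Prop) (p : {mpoly CC[s]}) : Prop :=
  forall m, m \in msupp p -> A m.

(* Degree comparison with the convention deg 0 < 0:
   msize p = deg p + 1 for p <> 0, and msize 0 = 0, so
   deg p <= deg q  <->  msize p <= msize q. *)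
Definition deg_le (s : nat) (p q : {mpoly CC[s]}) : Prop := leq (msize p) (msize q).

(* P is a degree reducing universal interpolation space of order N:
   for every finite X ⊂ C^s with #X <= N (given as a list X 0, ..., X (k-1)
   of k <= N points, repetitions allowed) and every q there is p ∈ P
   with p|_X = q|_X and deg p <= deg q. *)
Definition deg_red_univ_interp_space (s : nat) (P : {mpoly CC[s]} -> Prop)
    (N : nat) : Prop :=
  forall (k : nat) (X : 'I_k -> 'I_s -> CC), leq k N ->
  forall q : {mpoly CC[s]},
    exists p : {mpoly CC[s]},
      [/\ P p, (forall i : 'I_k, p.@[X i] = q.@[X i]) & deg_le p q].

Definition mon_deg_red_univ_interp_set (s : nat) (A : 'X_{1..s} -> Prop)
    (N : nat) : Prop :=
  deg_red_univ_interp_space (in_Pi_A A) N.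

(* Finite subsets of Γ are represented by duplicate-free lists. *)
Definition lower_set (s : nat) (B : seq 'X_{1..s}) : Prop :=
  forall a b : 'X_{1..s}, a \in B -> lem b a -> b \in B.

Definition in_L (s : nat) (j : nat) (B : seq 'X_{1..s}) : Prop :=
  [/\ lower_set B, uniq B & size B = j].

Definition A_star (s : nat) (N : nat) : 'X_{1..s} -> Prop :=
  fun a => exists j, (leq 1 j && leq j N) /\ exists B : seq 'X_{1..s}, in_L j B /\ a \in B.

(* Main.v *)
Require Import Defs.
From mathcomp Require Import all_boot all_order all_algebra.
From mathcomp Require Import Rstruct complex.
From mathcomp Require Import mpoly.
From Stdlib Require Import Classical.
Import GRing.Theory Order.TTheory Num.Theory.
Set Implicit Arguments.
Unset Strict Implicit.
Unset Printing Implicit Defensive.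
Local Open Scope ring_scope.

Section Part1.
Variables (s k : nat) (X : 'I_k -> 'I_s -> CC).
Local Notation mon := 'X_{1..s}.
Local Notation poly := {mpoly CC[s]}.

Definition agree (p q : poly) := forall i, p.@[X i] = q.@[X i].
Definition supp_in (P : mon -> Prop) (p : poly) := forall m, m \in msupp p -> P m.
Definition Rep (P : mon -> Prop) (f : poly) := exists p, supp_in P p /\ agree p f.

Lemma supp_in0 P : supp_in P 0.
Proof. by move=> m; rewrite msupp0. Qed.

Lemma supp_inD P p q : supp_in P p -> supp_in P q -> supp_in P (p + q).
Proof. by move=> hp hq m /msuppD_le; rewrite mem_cat => /orP[/hp|/hq]. Qed.

Lemma supp_inZ P c p : supp_in P p -> supp_in P (c *: p).
Proof. by move=> hp m /msuppZ_le /hp. Qed.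

Lemma supp_in_sum P (I : Type) (r : seq I) (F : I -> poly) :
  (forall i, supp_in P (F i)) -> supp_in P (\sum_(i <- r) F i).
Proof.
move=> h; elim: r => [|x r ih]; first by rewrite big_nil; apply: supp_in0.
by rewrite big_cons; apply: supp_inD.
Qed.

Lemma Rep0 P : Rep P 0.
Proof. by exists 0; split => //; apply: supp_in0. Qed.

Lemma RepD P f g : Rep P f -> Rep P g -> Rep P (f + g).
Proof.
move=> [p [hp ap]] [q [hq aq]]; exists (p + q); split; first exact: supp_inD.
by move=> i; rewrite !mevalD ap aq.
Qed.

Lemma RepZ P c f : Rep P f -> Rep P (c *: f).
Proof.
move=> [p [hp ap]]; exists (c *: p); split; first exact: supp_inZ.
by move=> i; rewrite !mevalZ ap.
Qed.

Lemma Rep_mono (P Q : mon -> Prop) f : (forall m, P m -> Q m) -> Rep P f -> Rep Q f.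
Proof. by move=> PQ [p [hp ap]]; exists p; split => // m /hp /PQ. Qed.

Lemma Rep_agree P f g : Rep P f -> agree f g -> Rep P g.
Proof. by move=> [p [hp ap]] afg; exists p; split => // i; rewrite ap afg. Qed.

Lemma Rep_of_supp P (P' : mon -> Prop) f :
  supp_in P' f -> (forall m, P' m -> Rep P 'X_[m]) -> Rep P f.
Proof.
move=> hf hm; rewrite [f]mpolyE.
elim: (msupp f) (fun m (H : m \in msupp f) => hf m H) => [|x r ih] H.
  by rewrite big_nil; apply: Rep0.
rewrite big_cons; apply: RepD; last by apply: ih => m hm'; apply: H; rewrite inE hm' orbT.
by apply: RepZ; apply: hm; apply: H; rewrite inE eqxx.
Qed.

Definition reducible (a : mon) := Rep (fun m => (m < a)%O) 'X_[a].
Definition Sset (a : mon) := ~ reducible a.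

Lemma reduce a : Rep (fun m => Sset m /\ (m <= a)%O) 'X_[a].
Proof.
elim/(@ltmwf s): a => a IH.
case: (classic (reducible a)) => [[p [hp ap]]|Na].
  apply: (@Rep_agree _ p) => //.
  apply: (Rep_of_supp hp) => m ltma.
  apply: Rep_mono (IH m ltma) => m' [Sm' lem'].
  by split => //; apply: le_trans lem' (ltW ltma).
exists 'X_[a]; split => // m; rewrite msuppX inE => /eqP ->; split => //.
Qed.

Lemma part1 q : exists p, [/\ supp_in Sset p, agree p q & msize p <= msize q]%N.
Proof.
have: Rep (fun m => Sset m /\ (mdeg m < msize q)%N) q.
  apply: (@Rep_of_supp _ (fun m => m \in msupp q)) => // m mq.
  apply: Rep_mono (reduce m) => m' [Sm' lem']; split => //.
  exact: leq_ltn_trans (lemc_mdeg lem') (msize_mdeg_lt mq).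
move=> [p [hp ap]]; exists p; split => //.
  by move=> m /hp [].
rewrite msizeE; apply/bigmax_leqP_seq => m /hp [_ h] _ //.
Qed.


Lemma S_lower a b : Sset a -> lem b a -> Sset b.
Proof.
move=> Sa ba [p [hp ap]]; apply: Sa.
exists (p * 'X_[(a - b)%MM]); split.
  move=> m; rewrite (perm_mem (msuppMX _ _)) => /mapP [m' /hp lt ->].
  by rewrite -{2}(submK ba) ltmc_add2r.
move=> i; rewrite !mevalM ap -mevalM -mpolyXD addmC submK //.
Qed.

Lemma S_card (l : seq mon) : uniq l -> (forall m, m \in l -> Sset m) -> (size l <= k)%N.
Proof.
move=> ul Sl.
pose M : 'M[CC]_(size l, k) := \matrix_(j, i) ('X_[nth 0%MM l j]).@[X i].
have: \rank M = size l.
  apply/eqP; rewrite eqn_leq rank_leq_row /=; apply/negP => /negP.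
  rewrite -ltnNge => hlt.
  have : kermx M != 0.
    by rewrite -mxrank_eq0 mxrank_ker subn_eq0 -ltnNge.
  case/rowV0Pn => v /sub_kermxP vM vn0.
  have [j1 vj1] : exists j, v 0 j != 0.
    apply/existsP; move: vn0; apply: contraR; rewrite negb_exists => /forallP h.
    by apply/eqP/matrixP => x y; rewrite !mxE ord1; apply/eqP; move: (h y); rewrite negbK.
  pose j0 := [arg max_(j > j1 | v 0 j != 0) nth 0%MM l j]%O.
  have [vj0 j0max] : v 0 j0 != 0 /\ forall j, v 0 j != 0 -> (nth 0%MM l j <= nth 0%MM l j0)%O.
    rewrite /j0; case: arg_maxP => //.
  apply: (Sl (nth 0%MM l j0)); first by rewrite mem_nth.
  exists (- (v 0 j0)^-1 *: \sum_(j < size l | j != j0) v 0 j *: 'X_[nth 0%MM l j]).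
  split.
    apply: supp_inZ; rewrite big_mkcond /=; apply: supp_in_sum => j.
    case: eqP => [_|/eqP jj0]; first exact: supp_in0.
    have [->|vj] := eqVneq (v 0 j) 0; first by rewrite scale0r; apply: supp_in0.
    move=> m; rewrite msuppMCX // inE => /eqP ->.
    rewrite lt_neqAle j0max // andbT nth_uniq //.
  move=> i; rewrite mevalZ raddf_sum /=.
  have h0 : \sum_(j < size l) v 0 j * ('X_[nth 0%MM l j]).@[X i] = 0.
    have := congr1 (fun A : 'M[CC]_(1,k) => A 0 i) vM; rewrite !mxE => h; apply: etrans h.
    by apply: eq_bigr => j _; rewrite mxE.
  rewrite (bigD1 j0) //= in h0.
  under eq_bigr => j _ do rewrite mevalZ.
  move/eqP: h0; rewrite addrC addr_eq0 => /eqP ->.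
  by rewrite mulrN mulNr opprK mulrA mulVf // mul1r.
by move=> <-; apply: rank_leq_col.
Qed.


Lemma S_Astar N a : (k <= N)%N -> Sset a -> A_star N a.
Proof.
move=> kN Sa.
pose B := [seq bmnm b | b <- enum (fun b : 'X_{1..s < (mdeg a).+1} => lem b a)].
have mem_box m : (m \in B) = lem m a.
  apply/mapP/idP => [[b]|ma]; first by rewrite mem_enum => h ->.
  have hb : (mdeg m < (mdeg a).+1)%N by rewrite ltnS; apply/lemc_mdeg/lem_leo.
  by exists (BMultinom hb); rewrite // mem_enum.
have uB : uniq B by rewrite map_inj_uniq ?enum_uniq //; exact: val_inj.
have aB : a \in B by rewrite mem_box lepm_refl.
exists (size B); split.
  apply/andP; split; first by move: aB; case: (B).
  apply: leq_trans kN; apply: S_card uB _ => m; rewrite mem_box; exact: S_lower.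
exists B; split => //; split => // a' b; rewrite !mem_box => h1 h2; exact: lepm_trans h2 h1.
Qed.

End Part1.
Fixpoint w (n j : nat) : CC :=
  match n with
  | 0 => (j == 0)%:R
  | n'.+1 => (if j is j'.+1 then w n' j' else 0) - w n' j
  end.

Lemma w_gt n j : (n < j)%N -> w n j = 0.
Proof.
elim: n j => [|n ih] [|j] //= h.
by rewrite ih // ih ?subrr //; apply: ltnW.
Qed.

Lemma w_shift d n (g : nat -> CC) : (n.+1 < d)%N ->
  \sum_(j < d) w n.+1 j * g j = \sum_(j < d) w n j * (g j.+1 - g j).
Proof.
case: d => [//|d] hnd.
rewrite /= (eq_bigr (fun j : 'I_d.+1 => (if (j:nat) is j'.+1 then w n j' else 0) * g j - w n j * g j)); last by move=> j _; rewrite mulrBl.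
rewrite sumrB big_ord_recl /= mul0r add0r.
under [in RHS]eq_bigr => j _ do rewrite mulrBr.
rewrite sumrB; congr (_ - _).
rewrite [RHS]big_ord_recr /= (w_gt (n:=n) (j:=d)) ?mul0r ?addr0 //.
Qed.

Lemma D_val d n e : (n < d)%N -> (e <= n)%N ->
  \sum_(j < d) w n j * (j%:R) ^+ e = if e == n then (n`!)%:R else 0 :> CC.
Proof.
elim: n e => [|n ih] e hnd hen.
  move: hen; rewrite leqn0 => /eqP ->; case: d hnd => // d _.
  rewrite big_ord_recl /= big1 ?addr0 ?mulr1 //.
  by move=> j _; rewrite mulr1.
rewrite (@w_shift d n (fun j => (j%:R : CC) ^+ e)) //.
have Ex (j : nat) : (j.+1%:R : CC) ^+ e - (j%:R) ^+ e = \sum_(i < e) (j%:R) ^+ i *+ 'C(e, i).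
  by rewrite -addn1 natrD exprD1n big_ord_recr /= binn mulr1n addrK.
under eq_bigr => j _ do rewrite Ex mulr_sumr.
rewrite exchange_big /=.
have E2 (i : 'I_e) : \sum_(j < d) w n j * ((j%:R : CC) ^+ i *+ 'C(e, i)) = (if (i == n :> nat) then (n`!)%:R else 0) *+ 'C(e, i).
  have hi : (i <= n)%N by rewrite -ltnS; exact: leq_trans (ltn_ord i) hen.
  rewrite -(ih i (ltnW hnd) hi).
  by rewrite -sumrMnl; apply: eq_bigr => j _; rewrite mulrnAr.
under eq_bigr => i _ do rewrite E2.
clear Ex E2.
case: (ltngtP e n.+1) hen => // [hen|->] _; last first.
  rewrite big_ord_recr /= eqxx big1 ?add0r.
    by rewrite binSn factS natrM mulr_natl.
  by move=> i _; rewrite /= (ltn_eqF (ltn_ord i)) mul0rn.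
rewrite big1 // => i _.
have : (i < n)%N by apply: leq_trans (ltn_ord i) _; exact: hen.
by move/ltn_eqF ->; rewrite mul0rn.
Qed.

Lemma mnm_le_mdeg s (m : 'X_{1..s}) c : (m c <= mdeg m)%N.
Proof. by rewrite mdegE (bigD1 c) //= leq_addr. Qed.

Lemma part2 s N (A : 'X_{1..s} -> Prop) :
  mon_deg_red_univ_interp_set A N -> forall a, A_star N a -> A a.
Proof.
move=> HA a [j [/andP[j1 jN] [B [[lowB uB sB] aB]]]].
pose d := (mdeg a).+1.
pose G := {ffun 'I_s -> 'I_d}.
pose Bx := [set g : G | [forall i, (g i <= a i)%N]].
pose phi (g : G) : 'X_{1..s} := [multinom (g i : nat) | i < s].
have phiBx g : g \in Bx -> lem (phi g) a.
  by rewrite inE => /forallP h; apply/mnm_lepP => i; rewrite mnmE.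
have kN : (#|Bx| <= N)%N.
  rewrite cardE -(size_map phi); apply: leq_trans jN; rewrite -sB.
  apply: uniq_leq_size.
    rewrite map_inj_uniq ?enum_uniq // => g1 g2 /(congr1 (fun m : 'X_{1..s} => m)) e.
    apply/ffunP => i; apply: val_inj.
    by have := congr1 (fun m : 'X_{1..s} => m i) e; rewrite !mnmE.
  move=> m /mapP [g]; rewrite mem_enum => gB ->.
  exact: lowB aB (phiBx g gB).
pose pt (g : G) (c : 'I_s) : CC := ((g c : nat)%:R).
pose X (i : 'I_#|Bx|) := pt (enum_val i).
have [p [pA pX pdeg]] := HA _ X kN 'X_[a].
apply: NNPP => Na.
have pa : p@_a = 0 by apply: memN_msupp_eq0; apply/negP => /pA.
pose f := 'X_[a] - p.
have fa : f@_a = 1 by rewrite mcoeffB mcoeffX eqxx pa subr0.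
have fdeg m : m \in msupp f -> (mdeg m <= mdeg a)%N.
  move=> /msuppB_le; rewrite mem_cat => /orP [].
    by rewrite msuppX inE => /eqP ->.
  move=> /msize_mdeg_lt h; move: (leq_trans h pdeg); rewrite /deg_le msizeX.
  by [].
have fX i : f.@[X i] = 0 by rewrite mevalB pX subrr.
pose W (g : G) : CC := \prod_(c < s) w (a c) (g c).
have L0 : \sum_(g : G) W g * f.@[pt g] = 0.
  apply: big1 => g _; case: (boolP (g \in Bx)) => gB.
    by have := fX (enum_rank_in gB g); rewrite /X enum_rankK_in // => ->; rewrite mulr0.
  move: gB; rewrite inE negb_forall => /existsP [c]; rewrite -ltnNge => hc.
  by rewrite /W (bigD1 c) //= w_gt ?mul0r.
have L1 : \sum_(g : G) W g * f.@[pt g] =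
   \sum_(m <- msupp f) f@_m * \prod_(c < s) (\sum_(t < d) w (a c) t * (t%:R)^+(m c)).
  under eq_bigr => g _ do rewrite mevalE mulr_sumr.
  rewrite exchange_big /=; apply: eq_bigr => m _.
  rewrite bigA_distr_bigA /= mulr_sumr; apply: eq_bigr => g _.
  by rewrite mulrCA /W -big_split.
have Pm m : m \in msupp f -> \prod_(c < s) (\sum_(t < d) w (a c) t * (t%:R)^+(m c))
   = if m == a then \prod_(c < s) ((a c)`!)%:R else 0.
  move=> mf; case: eqP => [->|nma].
    apply: eq_bigr => c _; rewrite D_val ?eqxx // ltnS; exact: mnm_le_mdeg.
  case: (boolP [exists c, (m c < a c)%N]) => [/existsP [c hc]|].
    rewrite (bigD1 c) //= D_val ?(ltn_eqF hc) ?mul0r ?(ltnW hc) //.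
    by rewrite ltnS mnm_le_mdeg.
  rewrite negb_exists => /forallP h; exfalso; apply: nma.
  have am : lem a m by apply/mnm_lepP => c; rewrite leqNgt h.
  have := fdeg m mf; rewrite -(submK am) mdegD -{2}[mdeg a]add0n leq_add2r leqn0 mdeg_eq0.
  by move/eqP ->; rewrite add0m.
have af : a \in msupp f by rewrite mcoeff_msupp fa oner_neq0.
move: L0; rewrite L1 (big_rem a) //= Pm // eqxx fa mul1r [X in _ + X]big_seq [X in _ + X]big1.
  rewrite addr0 => /eqP; apply/negP; rewrite -natr_prod pnatr_eq0 -lt0n.
  by rewrite prodn_gt0 // => c; rewrite fact_gt0.
move=> m.

rewrite mem_rem_uniq ?msupp_uniq // inE => /andP [nma mf].
by rewrite Pm // (negbTE nma) mulr0.
Qed.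

Theorem corollary20 (s N : nat) (HN : leq 1 N) :
  [/\ mon_deg_red_univ_interp_set (@A_star s N) N,
      (forall A : 'X_{1..s} -> Prop, mon_deg_red_univ_interp_set A N ->
         forall a, @A_star s N a -> A a)
    & (forall A : 'X_{1..s} -> Prop,
         (forall a, A a -> @A_star s N a) ->
         (exists a, @A_star s N a /\ ~ A a) ->
         ~ mon_deg_red_univ_interp_set A N)].
Proof.
have P2 := @part2 s N.
split.
- move=> k X kN q; have [p [hp ap hd]] := part1 X q.
  exists p; split => // m /hp; exact: S_Astar kN.
- exact: P2.
- by move=> A _ [a [aA Na]] HA; apply: Na (P2 A HA a aA).
Qed.
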